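(* Let $v>0$ and let $(a,r,s):\mathbb{R}\to\mathbb{R}^3$ be a solution of $$\partial_\xi a=r,\qquad \partial_\xi r=-vr-\frac{sa}{2}+\frac{a|r|}{2},\qquad \partial_\xi s=-vs-ra$$ such that $(a,r,s)(\xi)\to(a_0,0,0)$ as $\xi\to-\infty$ for some $a_0\in\mathbb{R}$, and $(a,r,s)\not\equiv(a_0,0,0)$. Then $|a_0|\ge\frac45 v$. In particular, there exists $\xi_0\in\mathbb{R}$ such that $a(\xi)$ is nonzero and of constant sign for all $\xi<\xi_0$. *)

(* Defs.v *)
From Stdlib Require Import Reals.
From Coquelicot Require Export Coquelicot.
Open Scope R_scope.

(* Main.v *)
Require Import Defs.
From Stdlib Require Import Reals Lra Classical.
From Coquelicot Require Import Coquelicot.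
Open Scope R_scope.

Lemma lim_minf (f : R -> R) (l : R) :
  filterlim f (Rbar_locally m_infty) (locally l) ->
  forall eps, 0 < eps -> exists M, forall x, x < M -> Rabs (f x - l) < eps.
Proof.
  intros H eps Heps.
  destruct (proj1 (filterlim_locally f l) H (mkposreal eps Heps)) as [M HM].
  exists M. intros x Hx. specialize (HM x Hx). exact HM.
Qed.

Lemma der_cont (f : R -> R) x d : is_derive f x d -> continuity_pt f x.
Proof.
  intros H. apply continuity_pt_filterlim. exact (ex_derive_continuous f x (ex_intro _ d H)).
Qed.

Lemma der_eq (f : R -> R) x l l' : is_derive f x l -> l = l' -> is_derive f x l'.
Proof. intros H ->; exact H. Qed.

Lemma key_ineq (v A r s : R) : Rabs A <= v ->
  2 * r * (- v * r - s * A / 2 + A * Rabs r / 2) + s * (- v * s - r * A) <= 0.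
Proof.
  intros H.
  assert (Hq : Rabs (r * Rabs r - 2 * r * s) <= 2 * r * r + s * s).
  { destruct (Rcase_abs r) as [Hr|Hr]; [rewrite (Rabs_left r Hr)|rewrite (Rabs_right r Hr)];
    pose proof (Rle_0_sqr (r - s)); pose proof (Rle_0_sqr (r + s)); unfold Rsqr in *; apply Rabs_le; split; nra. }
  assert (HA : A * (r * Rabs r - 2 * r * s) <= v * (2 * r * r + s * s)).
  { apply Rle_trans with (Rabs (A * (r * Rabs r - 2 * r * s))). apply Rle_abs.
    rewrite Rabs_mult. apply Rmult_le_compat; auto using Rabs_pos. }
  nra.
Qed.

Section S.
Variables (v : R) (a r s : R -> R).
Hypothesis Hv : 0 < v.
Hypothesis Ha : forall xi : R, is_derive a xi (r xi).
Hypothesis Hr : forall xi : R, is_derive r xi (- v * r xi - s xi * a xi / 2 + a xi * Rabs (r xi) / 2).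
Hypothesis Hs : forall xi : R, is_derive s xi (- v * s xi - r xi * a xi).

Let F t := r t * r t + s t * s t / 2.

Lemma F_der t : is_derive F t (2 * r t * (- v * r t - s t * a t / 2 + a t * Rabs (r t) / 2) + s t * (- v * s t - r t * a t)).
Proof.
  unfold F.
  assert (H1 := is_derive_mult r r t _ _ (Hr t) (Hr t) Rmult_comm).
  assert (H2 := is_derive_mult s s t _ _ (Hs t) (Hs t) Rmult_comm).
  apply (is_derive_scal _ _ (/2)) in H2.
  assert (H3 := is_derive_plus _ _ t _ _ H1 H2).
  simpl in H3. unfold plus, mult in H3; simpl in H3.
  eapply is_derive_ext. 2: eapply der_eq. 2: exact H3.
  intros; simpl; unfold plus, mult; simpl; unfold Rdiv; ring.
  match goal with |- ?x = ?y => change (@eq R x y) end; field.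
Qed.

Lemma mono x y : x <= y -> (forall t, x <= t <= y -> Rabs (a t) <= v) -> F y <= F x.
Proof.
  intros Hxy Hb.
  destruct (MVT_gen F x y _ (fun t _ => F_der t) (fun t _ => der_cont _ _ _ (F_der t))) as [c [Hc Hd]].
  rewrite Rmin_left in Hc by exact Hxy. rewrite Rmax_right in Hc by exact Hxy.
  pose proof (key_ineq v (a c) (r c) (s c) (Hb c Hc)). nra.
Qed.

Lemma const x y : x <= y -> (forall t, x <= t <= y -> r t = 0) -> a y = a x.
Proof.
  intros Hxy Hb.
  destruct (MVT_gen a x y _ (fun t _ => Ha t) (fun t _ => der_cont _ _ _ (Ha t))) as [c [Hc Hd]].
  rewrite Rmin_left in Hc by exact Hxy. rewrite Rmax_right in Hc by exact Hxy.
  rewrite (Hb c Hc) in Hd. lra.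
Qed.

Lemma F_zero t : F t <= 0 -> r t = 0 /\ s t = 0.
Proof. unfold F; intros; split; nra. Qed.
End S.

Lemma abs_lt x e : Rabs x < e -> - e < x < e.
Proof. intros H. split; [apply Ropp_lt_cancel; rewrite Ropp_involutive; apply Rle_lt_trans with (Rabs x); [rewrite <- Rabs_Ropp; apply Rle_abs|exact H]|apply Rle_lt_trans with (Rabs x); [apply Rle_abs|exact H]]. Qed.

Theorem lemma2 (v : R) (a r s : R -> R) (a0 : R) :
  0 < v ->
  (forall xi : R, is_derive a xi (r xi)) ->
  (forall xi : R, is_derive r xi (- v * r xi - s xi * a xi / 2 + a xi * Rabs (r xi) / 2)) ->
  (forall xi : R, is_derive s xi (- v * s xi - r xi * a xi)) ->
  filterlim a (Rbar_locally m_infty) (locally a0) ->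
  filterlim r (Rbar_locally m_infty) (locally 0) ->
  filterlim s (Rbar_locally m_infty) (locally 0) ->
  ~ (forall xi : R, a xi = a0 /\ r xi = 0 /\ s xi = 0) ->
  Rabs a0 >= 4 / 5 * v /\
  exists xi0 : R,
    (forall xi : R, xi < xi0 -> 0 < a xi) \/ (forall xi : R, xi < xi0 -> a xi < 0).
Proof.
  intros Hv Ha Hr Hs La Lr Ls Hnt.
  assert (Hbig : v <= Rabs a0).
  { destruct (Rle_or_lt v (Rabs a0)) as [H|Hsmall]; [exact H|exfalso].
    set (e := (v - Rabs a0) / 2).
    assert (He : 0 < e) by (unfold e; lra).
    set (P := fun xi => forall t, t < xi -> a t = a0 /\ r t = 0 /\ s t = 0).
    assert (Hmono := mono v a r s Hr Hs).
    assert (Hconst := const a r Ha).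
    simpl in Hmono.
    assert (Hi : exists M, P M).
    { destruct (lim_minf a a0 La e He) as [M1 HM1].
      assert (Hb : forall x, x < M1 -> Rabs (a x) <= v).
      { intros x Hx. specialize (HM1 x Hx). apply abs_lt in HM1.
        pose proof (Rle_abs a0); pose proof (Rle_abs (- a0)); rewrite Rabs_Ropp in *;
        apply Rabs_le; unfold e in *; split; lra. }
      assert (HF : forall t, t < M1 -> r t = 0 /\ s t = 0).
      { intros t Ht. apply (F_zero r s).
        destruct (Rle_or_lt (r t * r t + s t * s t / 2) 0) as [h|h]; [exact h|exfalso].
        set (eta := Rmin 1 ((r t * r t + s t * s t / 2) / 3)).
        assert (Heta : 0 < eta) by (unfold eta; apply Rmin_pos; lra).
        assert (Heta1 : eta <= 1) by apply Rmin_l.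
        assert (Heta2 : eta <= (r t * r t + s t * s t / 2) / 3) by apply Rmin_r.
        destruct (lim_minf r 0 Lr eta Heta) as [M2 HM2].
        destruct (lim_minf s 0 Ls eta Heta) as [M3 HM3].
        set (x := Rmin t (Rmin M2 M3) - 1).
        assert (Hx1 : x < t) by (unfold x; pose proof (Rmin_l t (Rmin M2 M3)); lra).
        assert (Hx2 : x < M2) by (unfold x; pose proof (Rmin_r t (Rmin M2 M3)); pose proof (Rmin_l M2 M3); lra).
        assert (Hx3 : x < M3) by (unfold x; pose proof (Rmin_r t (Rmin M2 M3)); pose proof (Rmin_r M2 M3); lra).
        specialize (HM2 x Hx2). specialize (HM3 x Hx3). rewrite Rminus_0_r in HM2, HM3.
        apply abs_lt in HM2. apply abs_lt in HM3.
        assert (Hm : r t * r t + s t * s t / 2 <= r x * r x + s x * s x / 2).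
        { apply Hmono. lra. intros u Hu. apply Hb. lra. }
        nra. }
      exists M1. intros t Ht. split; [|exact (HF t Ht)].
      destruct (Req_dec (a t) a0) as [h|h]; [exact h|exfalso].
      assert (Hp : 0 < Rabs (a t - a0)) by (apply Rabs_pos_lt; lra).
      destruct (lim_minf a a0 La _ Hp) as [M HM].
      set (x := Rmin t M - 1).
      assert (Hx1 : x < t) by (unfold x; pose proof (Rmin_l t M); lra).
      assert (Hx2 : x < M) by (unfold x; pose proof (Rmin_r t M); lra).
      specialize (HM x Hx2). rewrite (Hconst x t) in HM. lra. lra.
      intros u Hu. apply HF. lra. }
    assert (Hii : forall m, P m -> exists d, 0 < d /\ P (m + d)).
    { intros m Hm.
      assert (Hc := ex_derive_continuous a m (ex_intro _ (r m) (Ha m))).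
      destruct (proj1 (filterlim_locally a (a m)) Hc (mkposreal (e/2) ltac:(lra))) as [[d Hd] Hdm].
      simpl in Hdm.
      assert (Hd' : forall y, Rabs (y - m) < d -> Rabs (a y - a (m)) < e / 2) by (intros; apply Hdm; assumption).
      set (t0 := m - d / 2).
      assert (Ht0 : a t0 = a0 /\ r t0 = 0 /\ s t0 = 0) by (apply Hm; unfold t0; lra).
      assert (Ham : Rabs (a m - a0) < e / 2).
      { destruct Ht0 as [<- _]. rewrite <- Rabs_Ropp. replace (- (a m - a t0)) with (a t0 - a m) by ring.
        apply Hd'. unfold t0. rewrite Rabs_left; lra. }
      assert (Hb : forall y, Rabs (y - m) < d -> Rabs (a y) <= v).
      { intros y Hy. specialize (Hd' y Hy). apply abs_lt in Hd'. apply abs_lt in Ham.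
        pose proof (Rle_abs a0); pose proof (Rle_abs (- a0)); rewrite Rabs_Ropp in *;
        apply Rabs_le; unfold e in *; split; lra. }
      assert (Hrs : forall u, t0 <= u < m + d / 2 -> r u = 0 /\ s u = 0).
      { intros u Hu. apply (F_zero r s).
        destruct Ht0 as [_ [H1 H2]].
        apply Rle_trans with (r t0 * r t0 + s t0 * s t0 / 2).
        apply Hmono. lra. intros w Hw. apply Hb. unfold t0 in *. apply Rabs_def1; lra.
        rewrite H1, H2. lra. }
      exists (d / 2). split. lra.
      intros t Ht. destruct (Rlt_or_le t m) as [h|h]. apply Hm; exact h.
      destruct (Hrs t ltac:(unfold t0; lra)) as [h1 h2]. repeat split; try assumption.
      rewrite (Hconst t0 t). apply Ht0. unfold t0; lra.
      intros u Hu. apply Hrs. lra. }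
    destruct (classic (forall xi, P xi)) as [Hall|Hnall].
    { apply Hnt. intros xi. apply (Hall (xi + 1)). lra. }
    apply not_all_ex_not in Hnall. destruct Hnall as [xi Hxi].
    assert (Hub : forall y, P y -> y <= xi).
    { intros y Hy. destruct (Rle_or_lt y xi) as [h|h]; [exact h|exfalso].
      apply Hxi. intros t Ht. apply Hy. lra. }
    destruct (completeness P) as [m [Hm1 Hm2]].
    { exists xi. exact Hub. }
    { exact Hi. }
    assert (HPm : P m).
    { intros t Ht. destruct (classic (exists y, P y /\ t < y)) as [[y [Hy1 Hy2]]|Hno].
      apply Hy1; exact Hy2.
      exfalso. assert (t >= m).
      { apply Rle_ge, Hm2. intros y Hy. destruct (Rle_or_lt y t) as [h|h]; [exact h|].
        exfalso; apply Hno; exists y; split; assumption. }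
      lra. }
    destruct (Hii m HPm) as [d [Hd HPd]].
    specialize (Hm1 _ HPd). lra. }
  split. lra.
  assert (Hp : 0 < Rabs a0 / 2) by lra.
  destruct (lim_minf a a0 La _ Hp) as [M HM].
  exists M. destruct (Rcase_abs a0) as [h|h].
  - right. intros x Hx. specialize (HM x Hx). apply abs_lt in HM. rewrite Rabs_left in HM by exact h. lra.
  - left. intros x Hx. specialize (HM x Hx). apply abs_lt in HM. rewrite Rabs_right in HM, Hp, Hbig by exact h. lra.
Qed.
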